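(* Let $Q$ be an $[[n,k,d]]$ stabilizer code with codespace projector $P_Q$ whose Shor–Laflamme enumerators satisfy $A_{2i+1}=0$ for all $i$. Then $$\sum_{i=0}^n i\cdot 3^{-i}A_i\le\frac n4\,\frac{2^{n-k}}{3^n}\,B_n.$$
   Context: For an $[[n,k,d]]$ stabilizer code with projector $P_Q$ onto its $2^k$-dimensional codespace, the Shor–Laflamme enumerators are $A_i=\frac{1}{2^{2k}}\sum_{\sigma:w(\sigma)=i}\mathrm{Tr}[\sigma P_Q]\mathrm{Tr}[\sigma^\dagger P_Q]$ and $B_i=\frac{1}{2^k}\sum_{\sigma:w(\sigma)=i}\mathrm{Tr}[\sigma P_Q\sigma^\dagger P_Q]$, where $\sigma$ ranges over the $n$-qubit Pauli operators $\{\mathbb{1},X,Y,Z\}^{\otimes n}$ and $w(\sigma)$ is the number of non-identity tensor factors. *)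

(* Defs.v *)
From mathcomp Require Import all_boot all_order all_algebra all_field.
Set Implicit Arguments. Unset Strict Implicit. Unset Printing Implicit Defensive.
Import Order.TTheory GRing.Theory Num.Theory.
Local Open Scope ring_scope.

(* n-qubit Pauli strings: each factor coded as 0 = 1, 1 = X, 2 = Y, 3 = Z. *)
Definition pstring (n : nat) := {ffun 'I_n -> 'I_4}.

Definition wt n (s : pstring n) : nat := #|[set j | s j != ord0]|.

(* k-th bit of a computational basis index i of (C^2)^{\otimes n} *)
Definition qbit n (i : 'I_(2 ^ n)) (k : 'I_n) : bool := odd (i %/ 2 ^ k).

Definition pauli1 (p : 'I_4) (a b : bool) : algC :=
  match val p with
  | 0 => (a == b)%:R
  | 1 => (a != b)%:R
  | 2 => if a == b then 0 else if a then 'i else - 'i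
  | _ => if a == b then (if a then -1 else 1) else 0
  end.

(* the tensor product sigma_1 (x) ... (x) sigma_n, as a 2^n x 2^n matrix *)
Definition pauli_mx n (s : pstring n) : 'M[algC]_(2 ^ n) :=
  \matrix_(i, j) \prod_(k < n) pauli1 (s k) (qbit i k) (qbit j k).

Definition adjmx m (A : 'M[algC]_m) : 'M[algC]_m := (map_mx Num.conj A)^T.

(* Hermitian Pauli group elements (+/-) sigma; the bool is the sign (true = -). *)
Definition signed_mx n (s : bool * pstring n) : 'M[algC]_(2 ^ n) :=
  (-1) ^+ s.1 *: pauli_mx s.2.

Definition is_stabilizer_group n k (S : {set bool * pstring n}) : Prop :=
  [/\ (k <= n)%N,
      (false, [ffun=> ord0]) \in S,
      (true, [ffun=> ord0]) \notin S,
      (forall s t, s \in S -> t \in S ->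
          exists2 u, u \in S & signed_mx s *m signed_mx t = signed_mx u)
    & (forall s t, s \in S -> t \in S ->
          signed_mx s *m signed_mx t = signed_mx t *m signed_mx s)]
  /\ #|S| = (2 ^ (n - k))%N.

Definition code_projector n k (S : {set bool * pstring n}) : 'M[algC]_(2 ^ n) :=
  ((2 ^ (n - k))%:R)^-1 *: \sum_(s in S) signed_mx s.

Definition SL_A n k (P : 'M[algC]_(2 ^ n)) (i : nat) : algC :=
  ((2 ^ (2 * k))%:R)^-1 *
  \sum_(s : pstring n | wt s == i)
     \tr (pauli_mx s *m P) * \tr (adjmx (pauli_mx s) *m P).

Definition SL_B n k (P : 'M[algC]_(2 ^ n)) (i : nat) : algC :=
  ((2 ^ k)%:R)^-1 *
  \sum_(s : pstring n | wt s == i)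
     \tr (pauli_mx s *m P *m adjmx (pauli_mx s) *m P).

(* Main.v *)
Require Import Defs.
From mathcomp Require Import all_boot all_order all_algebra all_field.
From mathcomp Require Import ring zify.
From Stdlib Require Import Lia.
Import Order.TTheory GRing.Theory Num.Theory.
Set Implicit Arguments. Unset Strict Implicit. Unset Printing Implicit Defensive.
Local Open Scope ring_scope.

Definition chi1 (a b : 'I_4) : algC :=
  if (val a == 0%N) || (val b == 0%N) || (a == b) then 1 else -1.

Lemma ii : ('i : algC) * 'i = -1.
Proof. by rewrite -expr2 sqrCi. Qed.

Lemma conjNi : (- ('i : algC))^* = 'i.
Proof. by rewrite -conjCi conjCK. Qed.
Lemma conjN1 : ((-1 : algC))^* = -1.
Proof. by rewrite rmorphN1. Qed.
Lemma conj1' : ((1 : algC))^* = 1.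
Proof. by rewrite rmorph1. Qed.
Lemma conj0' : ((0 : algC))^* = 0.
Proof. by rewrite rmorph0. Qed.

Ltac q4 x := let m := fresh in let H := fresh in
  case: x => [[|[|[|[|m]]]] H] //.

Lemma Q1 (a : 'I_4) : \sum_(c : bool) pauli1 a c c = (val a == 0%N)%:R * 2.
Proof. rewrite big_bool; q4 a; rewrite /pauli1 /=; ring. Qed.

Lemma Q2 (x y : 'I_4) :
  \sum_(d : bool) \sum_(c : bool) pauli1 x d c * pauli1 y c d = (x == y)%:R * 2.
Proof.
have h := ii; rewrite !big_bool; q4 x; q4 y; rewrite /pauli1 /=; ring: h.
Qed.

Lemma Q3 (x y : 'I_4) (a b : bool) :
  \sum_(c : bool) (\sum_(c' : bool) pauli1 x a c' * pauli1 y c' c) * pauli1 x c b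
  = chi1 x y * pauli1 y a b.
Proof.
have h := ii.
rewrite !big_bool; q4 x; q4 y; case: a; case: b; rewrite /chi1 /pauli1 /=; ring: h.
Qed.

Lemma Q4 (x : 'I_4) (a b : bool) : (pauli1 x b a)^* = pauli1 x a b.
Proof.
q4 x; case: a; case: b; rewrite /pauli1 /=; by rewrite ?conj0' ?conj1' ?conjN1 ?conjNi ?conjCi.
Qed.

Lemma Q5 (x : 'I_4) (a b : bool) :
  \sum_(c : bool) pauli1 x a c * pauli1 x c b = (a == b)%:R.
Proof.
have h := ii.
rewrite !big_bool; q4 x; case: a; case: b; rewrite /pauli1 /=; ring: h.
Qed.

Lemma chi1_pm a b : (chi1 a b == 1) || (chi1 a b == -1).
Proof. by rewrite /chi1; case: ifP; rewrite eqxx ?orbT. Qed.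
Lemma bits_nat n a b : (a < 2 ^ n)%N -> (b < 2 ^ n)%N ->
  (forall k, (k < n)%N -> odd (a %/ 2 ^ k) = odd (b %/ 2 ^ k)) -> a = b.
Proof.
elim: n a b => [|n IH] a b ha hb h.
  by move: ha hb; rewrite expn0 !ltnS !leqn0 => /eqP -> /eqP ->.
have h0 := h 0%N isT; rewrite expn0 !divn1 in h0.
have e : (a %/ 2 = b %/ 2)%N.
  apply: IH; first by rewrite ltn_divLR // -expnSr.
    by rewrite ltn_divLR // -expnSr.
  by move=> k hk; rewrite -!divnMA -expnS; apply: h.
by rewrite -[a]odd_double_half -[b]odd_double_half h0 -!divn2 e.
Qed.

Definition bits n (i : 'I_(2 ^ n)) : {ffun 'I_n -> bool} := [ffun k => qbit i k].

Lemma bits_inj n : injective (@bits n).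
Proof.
move=> i j /ffunP h; apply: val_inj; apply: (bits_nat (ltn_ord i) (ltn_ord j)) => k hk.
by have := h (Ordinal hk); rewrite !ffunE.
Qed.

Lemma bits_bij n : bijective (@bits n).
Proof. by apply: inj_card_bij (@bits_inj n) _; rewrite card_ffun card_bool !card_ord. Qed.

Lemma sum_tens n (F : 'I_n -> bool -> algC) :
  \sum_(l < 2 ^ n) \prod_(k < n) F k (qbit l k) = \prod_(k < n) \sum_(c : bool) F k c.
Proof.
rewrite bigA_distr_bigA (reindex (@bits n)) /=; last first.
  by apply: onW_bij; apply: bits_bij.
by apply: eq_bigr => l _; apply: eq_bigr => k _; rewrite ffunE.
Qed.

Definition tens n (F : 'I_n -> bool -> bool -> algC) : 'M[algC]_(2 ^ n) :=
  \matrix_(i, j) \prod_(k < n) F k (qbit i k) (qbit j k).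

Lemma tens_mul n (F G : 'I_n -> bool -> bool -> algC) :
  tens F *m tens G = tens (fun k a b => \sum_(c : bool) F k a c * G k c b).
Proof.
apply/matrixP => i j; rewrite !mxE.
under eq_bigr => l _ do rewrite !mxE -big_split /=.
by rewrite (sum_tens (fun k c => F k (qbit i k) c * G k c (qbit j k))).
Qed.

Lemma tens_tr n (F : 'I_n -> bool -> bool -> algC) :
  \tr (tens F) = \prod_(k < n) \sum_(c : bool) F k c c.
Proof.
rewrite /mxtrace; under eq_bigr => l _ do rewrite mxE.
by rewrite (sum_tens (fun k c => F k c c)).
Qed.

Lemma tens_eq n (F G : 'I_n -> bool -> bool -> algC) :
  (forall k a b, F k a b = G k a b) -> tens F = tens G.
Proof. by move=> h; apply/matrixP => i j; rewrite !mxE; apply: eq_bigr => k _. Qed.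

Lemma tens_scale n (c : 'I_n -> algC) (F : 'I_n -> bool -> bool -> algC) :
  tens (fun k a b => c k * F k a b) = (\prod_(k < n) c k) *: tens F.
Proof. by apply/matrixP => i j; rewrite !mxE big_split. Qed.

Lemma tens_id n : tens (fun (k : 'I_n) (a b : bool) => (a == b)%:R) = 1%:M.
Proof.
apply/matrixP => i j; rewrite !mxE.
case: (eqVneq i j) => [->|ne].
  rewrite /= mulr1n; apply: big1 => k _; by rewrite eqxx.
rewrite /=.
have [k hk] : exists k, qbit i k != qbit j k.
  apply/existsP; apply: contraR ne; rewrite negb_exists => /forallP h.
  apply/eqP/bits_inj/ffunP => k; rewrite !ffunE; by have := h k; rewrite negbK => /eqP.
by rewrite (bigD1 k) //= (negbTE hk) mul0r.
Qed.

Definition chi n (s t : pstring n) : algC := \prod_(k < n) chi1 (s k) (t k).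

Lemma pauli_tens n (s : pstring n) : pauli_mx s = tens (fun k => pauli1 (s k)).
Proof. by []. Qed.

Lemma prod_eq_ffun n (s t : pstring n) :
  \prod_(k < n) ((s k == t k)%:R : algC) = (s == t)%:R.
Proof.
case: (eqVneq s t) => [->|ne]; first by apply: big1 => k _; rewrite eqxx.
have [k hk] : exists k, s k != t k.
  apply/existsP; apply: contraR ne; rewrite negb_exists => /forallP h.
  apply/eqP/ffunP => k; by have := h k; rewrite negbK => /eqP.
by rewrite (bigD1 k) //= (negbTE hk) mul0r.
Qed.

Lemma pauli_tr_mul n (s t : pstring n) :
  \tr (pauli_mx s *m pauli_mx t) = (s == t)%:R * (2 ^ n)%:R.
Proof.
rewrite !pauli_tens tens_mul tens_tr.
under eq_bigr => k _ do rewrite Q2.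
by rewrite big_split /= prod_eq_ffun prodr_const card_ord natrX.
Qed.

Lemma pauli_tr n (s : pstring n) :
  \tr (pauli_mx s) = (s == [ffun=> ord0])%:R * (2 ^ n)%:R.
Proof.
rewrite !pauli_tens tens_tr.
under eq_bigr => k _ do rewrite Q1.
rewrite big_split /= prodr_const card_ord natrX; congr (_ * _).
rewrite -prod_eq_ffun; apply: eq_bigr => k _; by rewrite ffunE.
Qed.

Lemma pauli_sq n (s : pstring n) : pauli_mx s *m pauli_mx s = 1%:M.
Proof.
rewrite !pauli_tens tens_mul -tens_id; apply: tens_eq => k a b; exact: Q5.
Qed.

Lemma pauli_conj n (s t : pstring n) :
  pauli_mx s *m pauli_mx t *m pauli_mx s = chi s t *: pauli_mx t.
Proof.
rewrite !pauli_tens !tens_mul -tens_scale; apply: tens_eq => k a b; exact: Q3.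
Qed.

Lemma pauli_adj n (s : pstring n) : adjmx (pauli_mx s) = pauli_mx s.
Proof.
apply/matrixP => i j; rewrite !mxE rmorph_prod; apply: eq_bigr => k _; exact: Q4.
Qed.

Lemma chi_pm n (s t : pstring n) : (chi s t == 1) || (chi s t == -1).
Proof.
rewrite /chi; apply: (big_ind (fun x : algC => (x == 1) || (x == -1))).
- by rewrite eqxx.
- move=> x y /orP[]/eqP-> /orP[]/eqP->; rewrite ?mulr1 ?mul1r ?mulrNN ?mulr1 ?eqxx ?orbT //.
- by move=> k _; apply: chi1_pm.
Qed.

Lemma N1neq1 : (-1 : algC) != 1.
Proof.
rewrite -subr_eq0 -opprD oppr_eq0 -[1 + 1]/(2%:R : algC) pnatr_eq0 //.
Qed.

Lemma Nn0 n : ((2 ^ n)%:R : algC) != 0.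
Proof. by rewrite pnatr_eq0 expn_eq0. Qed.

Lemma signed_tr_mul n (u v : bool * pstring n) :
  \tr (signed_mx u *m signed_mx v) =
  (-1) ^+ u.1 * (-1) ^+ v.1 * ((u.2 == v.2)%:R * (2 ^ n)%:R).
Proof.
by rewrite /signed_mx -scalemxAl -scalemxAr !mxtraceZ pauli_tr_mul mulrA.
Qed.

Lemma sign_sq (b : bool) : ((-1) ^+ b * (-1) ^+ b : algC) = 1.
Proof. by case: b; rewrite ?expr1 ?expr0 ?mulrNN ?mulr1. Qed.

Lemma sign_ne (b b' : bool) : b != b' -> ((-1) ^+ b * (-1) ^+ b' : algC) = -1.
Proof. by case: b; case: b' => //= _; rewrite ?expr1 ?expr0 ?mulr1 ?mul1r. Qed.

Lemma signed_inj n : injective (@signed_mx n).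
Proof.
move=> [b s] [b' s'] h.
have := signed_tr_mul (b, s) (b', s'); rewrite -h signed_tr_mul /= eqxx mul1r sign_sq.
case: (eqVneq s s') => [<-|ne]; last first.
  by rewrite mul0r mulr0 => /eqP; rewrite mul1r (negbTE (Nn0 n)).
rewrite mul1r => /eqP; rewrite -subr_eq0 -{1}[(2 ^ n)%:R]mul1r -mulrBl mulf_eq0 (negbTE (Nn0 n)) orbF.
clear h; rewrite subr_eq0; case: b; case: b' => //=; rewrite ?expr1 ?expr0 ?mulr1 ?mul1r ?mulrNN.
all: by rewrite eq_sym (negbTE N1neq1).
Qed.

Lemma pauli_id n : pauli_mx ([ffun=> ord0] : pstring n) = 1%:M.
Proof. by rewrite pauli_tens -tens_id; apply: tens_eq => k a b; rewrite ffunE. Qed.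

Lemma signed_conj n (s : pstring n) u :
  pauli_mx s *m signed_mx u *m pauli_mx s = chi s u.2 *: signed_mx u.
Proof.
by rewrite /signed_mx -scalemxAr -scalemxAl pauli_conj scalerA mulrC -scalerA.
Qed.

Lemma scal_cancel n (u : bool * pstring n) (c d : algC) :
  c *: signed_mx u = d *: signed_mx u -> c = d.
Proof.
move=> h; have := congr1 (fun M => \tr (M *m signed_mx u)) h.
rewrite -(scalemxAl c (signed_mx u)) -(scalemxAl d (signed_mx u)) !mxtraceZ signed_tr_mul eqxx sign_sq mul1r mul1r.
by move/mulIf; apply; apply: Nn0.
Qed.

Lemma signed_sq n (u : bool * pstring n) : signed_mx u *m signed_mx u = 1%:M.
Proof.
by rewrite /signed_mx -scalemxAl -scalemxAr pauli_sq scalerA sign_sq scale1r.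
Qed.

Section Stab.
Variables (n k : nat) (S : {set bool * pstring n}).
Hypothesis HS : is_stabilizer_group k S.

Lemma uniq_S u v : u \in S -> v \in S -> u.2 = v.2 -> u = v.
Proof.
case: HS => [[hk hid hnid hclos hcomm] hcard].
case: u => b s; case: v => b' s' uS vS /= e; subst s'.
case: (eqVneq b b') => [->//|ne].
have [w wS hw] := hclos _ _ uS vS.
have : signed_mx w = signed_mx (true, [ffun=> ord0]).
  rewrite -hw /signed_mx -scalemxAl -scalemxAr pauli_sq scalerA.
  rewrite pauli_id; congr (_ *: _).
  by rewrite sign_ne // expr1.
move/signed_inj => ew; by rewrite -ew wS in hnid.
Qed.

Lemma trMM u v : u \in S -> v \in S ->
  \tr (signed_mx u *m signed_mx v) = (u == v)%:R * (2 ^ n)%:R.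
Proof.
move=> uS vS; rewrite signed_tr_mul.
case: (eqVneq u v) => [<-|ne]; first by rewrite eqxx sign_sq !mul1r.
case: (eqVneq u.2 v.2) => [e|ne2]; last by rewrite !mul0r mulr0.
by move: ne; rewrite (uniq_S uS vS e) eqxx.
Qed.

Lemma chi_mul s u v w : u \in S -> v \in S ->
  signed_mx w = signed_mx u *m signed_mx v ->
  chi s w.2 = chi s u.2 * chi s v.2.
Proof.
move=> uS vS hw; apply: (@scal_cancel _ w).
rewrite -signed_conj hw.
have -> : forall (a b : algC) (A B : 'M[algC]_(2 ^ n)),
    (a * b) *: (A *m B) = (a *: A) *m (b *: B).
  by move=> a b A B; rewrite -scalemxAl -scalemxAr scalerA.
rewrite -!signed_conj.
rewrite -!mulmxA (mulmxA (pauli_mx s) (pauli_mx s)) pauli_sq mul1mx.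
by rewrite !mulmxA.
Qed.

Lemma sum_chi_ge0 s : 0 <= \sum_(u in S) chi s u.2.
Proof.
case: HS => [[hk hid hnid hclos hcomm] hcard].
case: (boolP [forall u in S, chi s u.2 == 1]) => [/forall_inP h1|].
  rewrite (eq_bigr (fun _ => 1)); last by move=> u /h1/eqP.
  by rewrite sumr_const ler0n.
rewrite negb_forall_in => /exists_inP[v vS hv].
have fv : chi s v.2 = -1 by move: (chi_pm s v.2); rewrite (negbTE hv) /= => /eqP.
pose h u := odflt u [pick w in S | signed_mx w == signed_mx u *m signed_mx v].
have hP u : u \in S -> h u \in S /\ signed_mx (h u) = signed_mx u *m signed_mx v.
  move=> uS; rewrite /h; case: pickP => [w /andP[wS /eqP ->] //|none].
  have [w wS hw] := hclos _ _ uS vS.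
  by move: (none w); rewrite wS hw eqxx.
have hinj : {in S &, injective h}.
  move=> u u' uS u'S e; apply: signed_inj.
  have := congr1 (fun M => M *m signed_mx v) (congr1 (@signed_mx n) e).
  rewrite /= (hP _ uS).2 (hP _ u'S).2 -!mulmxA signed_sq !mulmx1 //.
have himS : h @: S = S.
  apply/eqP; rewrite eqEcard (card_in_imset hinj) leqnn andbT.
  by apply/subsetP => x /imsetP[u uS ->]; case: (hP _ uS).
have e : \sum_(u in S) chi s u.2 = - \sum_(u in S) chi s u.2.
  rewrite -{1}himS big_imset //= -sumrN; apply: eq_bigr => u uS.
  by rewrite (chi_mul s uS vS (hP _ uS).2) fv mulrN1.
have -> : \sum_(u in S) chi s u.2 = 0.
  move/eqP: e; rewrite -subr_eq0 opprK -mulr2n -mulr_natr mulf_eq0.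
  by rewrite pnatr_eq0 orbF => /eqP.
by [].
Qed.

Let c0 : algC := ((2 ^ (n - k))%:R)^-1.
Let P := code_projector k S.

Lemma c0N : c0 * (2 ^ n)%:R = (2 ^ k)%:R.
Proof.
case: HS => [[hk _ _ _ _] _].
have e : (2 ^ n = 2 ^ (n - k) * 2 ^ k)%N by rewrite -expnD subnK.
by rewrite /c0 e natrM mulKf // Nn0.
Qed.

Lemma trsP s : \tr (pauli_mx s *m P) =
  c0 * (2 ^ n)%:R * \sum_(u in S) (-1) ^+ u.1 * (s == u.2)%:R.
Proof.
rewrite /P /code_projector -scalemxAr linearZ /= mulmx_sumr raddf_sum -mulrA; congr (_ * _).
rewrite mulr_sumr; apply: eq_bigr => u _.
rewrite /signed_mx -scalemxAr /= mxtraceZ pauli_tr_mul; ring.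
Qed.

Lemma sum_single (G : bool * pstring n -> algC) s u0 : u0 \in S -> u0.2 = s ->
  \sum_(u in S) G u * (s == u.2)%:R = G u0.
Proof.
move=> u0S e; rewrite (bigD1 u0) //= e eqxx mulr1 big1 ?addr0 // => u /andP[uS ne].
case: (eqVneq s u.2) => [e2|]; last by rewrite mulr0.
by move: ne; rewrite (uniq_S uS u0S) ?eqxx // e.
Qed.

Lemma sum_none (G : bool * pstring n -> algC) s :
  (forall u, u \in S -> u.2 != s) ->
  \sum_(u in S) G u * (s == u.2)%:R = 0.
Proof.
by move=> h; apply: big1 => u uS; rewrite eq_sym (negbTE (h u uS)) mulr0.
Qed.

Lemma sq_count s :
  (\sum_(u in S) (-1) ^+ u.1 * (s == u.2)%:R) ^+ 2 = \sum_(u in S) 1 * (s == u.2)%:R :> algC.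
Proof.
case: (boolP [exists u in S, u.2 == s]) => [/exists_inP[u0 u0S /eqP e]|].
  rewrite (sum_single (fun u => (-1) ^+ u.1) u0S e) (sum_single (fun u => 1) u0S e).
  by rewrite sqrr_sign.
rewrite negb_exists_in => /forall_inP h.
rewrite (sum_none (fun u => (-1) ^+ u.1)) ?(sum_none (fun u => 1)) ?expr0n // => u /h //.
Qed.

Lemma A_formula i : SL_A k P i = \sum_(u in S) (wt u.2 == i)%:R.
Proof.
rewrite /SL_A.
under eq_bigr => s _ do rewrite pauli_adj trsP -expr2 exprMn c0N sq_count.
rewrite -mulr_sumr mulrA mulnC expnM natrX mulVf ?mul1r; last by rewrite expf_neq0 // Nn0.
rewrite exchange_big /=; apply: eq_bigr => u uS.
case hw: (wt u.2 == i).
  rewrite (bigD1 u.2) //= eqxx mul1r big1 ?addr0 // => s /andP[_ ne].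
  by rewrite (negbTE ne) mulr0.
by apply: big1 => s /eqP ws; case: (eqVneq s u.2) => [e|]; [rewrite -e ws eqxx in hw | rewrite mulr0].
Qed.

Lemma trB s : \tr (pauli_mx s *m P *m adjmx (pauli_mx s) *m P) =
  c0 * c0 * (2 ^ n)%:R * \sum_(u in S) chi s u.2.
Proof.
rewrite pauli_adj.
have -> : pauli_mx s *m P *m pauli_mx s = c0 *: \sum_(u in S) chi s u.2 *: signed_mx u.
  rewrite /P /code_projector -scalemxAr -scalemxAl mulmx_sumr mulmx_suml.
  by congr (_ *: _); apply: eq_bigr => u _; rewrite signed_conj.
rewrite /P /code_projector -scalemxAl -scalemxAr linearZ /= linearZ /= -!mulrA.
congr (_ * (_ * _)).
rewrite mulmx_suml raddf_sum /= mulr_sumr; apply: eq_bigr => u uS /=.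
rewrite -scalemxAl mxtraceZ mulmx_sumr raddf_sum /=.
rewrite (bigD1 u) //= trMM // eqxx mul1r big1 ?addr0; first by rewrite mulrC.
move=> v /andP[vS ne]; rewrite trMM // eq_sym (negbTE ne) mul0r //.
Qed.

Lemma B_formula j : SL_B k P j =
  c0 * \sum_(s : pstring n | wt s == j) \sum_(u in S) chi s u.2.
Proof.
rewrite /SL_B; under eq_bigr => s _ do rewrite trB.
rewrite -mulr_sumr mulrA; congr (_ * _).
by rewrite -mulrA c0N mulrCA mulVf ?mulr1 // Nn0.
Qed.

End Stab.

Definition h1 (b : 'I_4) : algC := if val b == 0%N then 3%:R else -1.

Lemma chi1_0 b : chi1 ord0 b = 1.
Proof. by []. Qed.

Lemma sum_chi1_nz b : \sum_(a : 'I_4 | a != ord0) chi1 a b = h1 b.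
Proof.
rewrite big_mkcond /= !big_ord_recr big_ord0 /=.
q4 b; rewrite /chi1 /h1 /=; ring.
Qed.

Lemma wt_n n (s : pstring n) : (wt s == n) = [forall k, s k != ord0].
Proof.
rewrite /wt; apply/eqP/forallP => [h k|h].
  have hc : #|[set j | s j != ord0]| = #|[set: 'I_n]| by rewrite cardsT card_ord h.
  have := subsetT [set j | s j != ord0]; move/(subset_cardP hc)/(_ k).
  by rewrite !inE.
rewrite -[RHS](card_ord n) -cardsT; apply: eq_card => j; by rewrite !inE h.
Qed.

Lemma K_n n (t : pstring n) :
  \sum_(s : pstring n | wt s == n) chi s t = \prod_(k < n) h1 (t k).
Proof.
rewrite [RHS](eq_bigr (fun k => \sum_(a : 'I_4 | a != ord0) chi1 a (t k))); last first.
  by move=> k _; rewrite sum_chi1_nz.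
rewrite (bigA_distr_big_dep (fun _ a => a != ord0) (fun k a => chi1 a (t k))).
apply: eq_bigl => s; rewrite wt_n; apply/forallP/familyP => h k; exact: h.
Qed.

Lemma split_wt n (s : pstring n.+1) :
  ((wt s == n)%:R : algC) =
  \sum_(j < n.+1) ([forall k, (s k == ord0) == (k == j)])%:R.
Proof.
pose Z := [set k | s k == ord0].
have wZ : (#|Z| + wt s)%N = n.+1.
  have e2 := cardsC Z; rewrite card_ord in e2.
  have -> : wt s = #|~: Z| by apply: eq_card => j; rewrite !inE.
  exact: e2.
have eqj j : [forall k, (s k == ord0) == (k == j)] = (Z == [set j]).
  apply/idP/idP.
    move/forallP => h; apply/eqP/setP => i; rewrite !inE; exact: (eqP (h i)).
  move/eqP => hZ; apply/forallP => k; move/setP: hZ => /(_ k); rewrite !inE => ->.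
  by rewrite eqxx.
have -> : (wt s == n) = (#|Z| == 1%N).
  by apply/eqP/eqP; move: wZ; lia.
transitivity (\sum_(j < n.+1) ((Z == [set j]) : nat)%:R : algC); last first.
  by apply: eq_bigr => j _; rewrite eqj.
case: cards1P => [[x ->]|nZ].
  rewrite (bigD1 x) //= eqxx big1 ?addr0 // => j ne.
  by rewrite (inj_eq set1_inj) eq_sym (negbTE ne).
by rewrite big1 // => j _; case: eqP => // ezj; case: nZ; exists j.
Qed.

Lemma h1_neq0 b : h1 b != 0.
Proof.
rewrite /h1; case: ifP => _; first by rewrite pnatr_eq0.
by rewrite oppr_eq0 oner_eq0.
Qed.

Lemma K_pred n (t : pstring n.+1) :
  \sum_(s : pstring n.+1 | wt s == n) chi s t =
  \sum_(j < n.+1) (\prod_(k < n.+1) h1 (t k)) / h1 (t j).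
Proof.
rewrite big_mkcond /=.
under eq_bigr => s _ do rewrite -mulrb -mulr_natl split_wt mulr_suml.
rewrite exchange_big /=; apply: eq_bigr => j _.
under eq_bigr => s _ do rewrite mulr_natl mulrb.
rewrite -big_mkcond /=.
transitivity (\prod_(k < n.+1) \sum_(a : 'I_4 | (a == ord0) == (k == j)) chi1 a (t k)).
  rewrite (bigA_distr_big_dep (fun k a => (a == ord0) == (k == j)) (fun k a => chi1 a (t k))).
  by apply: eq_bigl => s; apply/forallP/familyP => h k; exact: h.
rewrite (bigD1 j) //= [in RHS](bigD1 j) //= eqxx.
rewrite (eq_bigl (fun a : 'I_4 => a == ord0)); last by move=> a; rewrite eqb_id.
rewrite big_pred1_eq chi1_0 mul1r mulrC mulrA mulVf ?h1_neq0 // mul1r.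
apply: eq_bigr => k ne; rewrite (negbTE ne) -sum_chi1_nz; apply: eq_bigl => a.
by case: (a == ord0).
Qed.

Lemma three_neq0 : (3%:R : algC) != 0.
Proof. by rewrite pnatr_eq0. Qed.

Lemma wt_sum n (t : pstring n) : \sum_(j < n) ((t j != ord0) : nat)%:R = (wt t)%:R :> algC.
Proof.
rewrite -natr_sum /wt -sum1_card; congr _%:R.
rewrite [RHS]big_mkcond /=; apply: eq_bigr => j _; rewrite inE; by case: (t j != ord0).
Qed.

Lemma G_formula n (t : pstring n) :
  \prod_(k < n) h1 (t k) = (3 ^ n)%:R * (- (3%:R)^-1) ^+ wt t.
Proof.
have h3 := three_neq0.
have e b : h1 b = 3%:R * (if b != ord0 then - (3%:R)^-1 else 1).
  by q4 b; rewrite /h1 /=; field.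
rewrite (eq_bigr (fun k => 3%:R * (if t k != ord0 then - (3%:R)^-1 else 1))); last first.
  by move=> k _; rewrite e.
rewrite big_split /= prodr_const card_ord natrX; congr (_ * _).
rewrite -big_mkcond /= prodr_const; congr (_ ^+ _).
by rewrite /wt; apply: eq_card => j; rewrite !inE.
Qed.

Lemma inv_sum n (t : pstring n) :
  \sum_(j < n) (h1 (t j))^-1 = n%:R / 3%:R - 4%:R / 3%:R * (wt t)%:R.
Proof.
have h3 := three_neq0.
have e b : (h1 b)^-1 = (3%:R)^-1 - 4%:R / 3%:R * ((b != ord0) : nat)%:R.
  by q4 b; rewrite /h1 /=; field.
rewrite (eq_bigr (fun j => (3%:R)^-1 - 4%:R / 3%:R * ((t j != ord0) : nat)%:R)); last first.
  by move=> j _; rewrite e.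
rewrite sumrB sumr_const card_ord -mulr_sumr wt_sum mulr_natl.
by rewrite mulrC mulr_natl.
Qed.

Lemma wt_le n (s : pstring n) : (wt s <= n)%N.
Proof.
rewrite /wt; have := max_card (mem [set j | s j != ord0]); rewrite card_ord.
by move=> h; exact: h.
Qed.

Lemma posit n k (S : {set bool * pstring n}) :
  is_stabilizer_group k S -> (forall u, u \in S -> ~~ odd (wt u.2)) ->
  0 <= \sum_(u in S) ((3 ^ wt u.2)%:R)^-1 * (n%:R - 4%:R * (wt u.2)%:R) :> algC.
Proof.
case: n S => [|n] S HS hev.
  rewrite big1 // => u _.
  have /eqP -> : wt u.2 == 0%N by rewrite -leqn0 wt_le.
  by rewrite mulr0 subr0 mulr0.
have h3 := three_neq0.
have : 0 <= \sum_(s : pstring n.+1 | wt s == n) \sum_(u in S) chi s u.2.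
  by apply: sumr_ge0 => s _; exact: (sum_chi_ge0 HS s).
rewrite exchange_big /=.
have -> : \sum_(u in S) \sum_(s : pstring n.+1 | wt s == n) chi s u.2 =
   \sum_(u in S) ((3 ^ n)%:R * (((3 ^ wt u.2)%:R)^-1 * (n.+1%:R - 4%:R * (wt u.2)%:R))).
  apply: eq_bigr => u uS; rewrite K_pred -mulr_sumr inv_sum G_formula.
  rewrite exprNn -signr_odd (negbTE (hev u uS)) expr0 mul1r exprVn -natrX.
  rewrite [(3 ^ n.+1)%N]expnS natrM.
  by field; rewrite pnatr_eq0 expn_eq0.
rewrite -mulr_sumr pmulr_rge0 //.
by rewrite ltr0n expn_gt0.
Qed.

Theorem proposition7 (n k : nat) (S : {set bool * pstring n}) :
  is_stabilizer_group k S ->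
  (forall i : nat, SL_A k (code_projector k S) i.*2.+1 = 0) ->
  \sum_(i < n.+1) (i%:R * ((3 ^ i)%:R)^-1 * SL_A k (code_projector k S) i)
    <= n%:R / 4%:R * ((2 ^ (n - k))%:R / (3 ^ n)%:R)
       * SL_B k (code_projector k S) n.
Proof.
move=> HS hodd.
have hev u : u \in S -> ~~ odd (wt u.2).
  move=> uS; apply/negP => ho.
  have := hodd (wt u.2)./2; rewrite (A_formula HS).
  have -> : ((wt u.2)./2.*2.+1 = wt u.2)%N by rewrite -[RHS]odd_double_half ho.
  move/(psumr_eq0P (fun v _ => ler0n _ _))/(_ u uS).
  by rewrite eqxx => /eqP; rewrite oner_eq0.
have wle (s : pstring n) : (wt s < n.+1)%N := wt_le s.
pose e (u : bool * pstring n) : algC := ((3 ^ wt u.2)%:R)^-1.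
have hG u : u \in S -> \prod_(k0 < n) h1 (u.2 k0) = (3 ^ n)%:R * e u.
  move=> uS; rewrite G_formula exprNn -signr_odd (negbTE (hev u uS)) expr0 mul1r.
  by rewrite exprVn /e !natrX.
have hL : \sum_(i < n.+1) (i%:R * ((3 ^ i)%:R)^-1 * SL_A k (code_projector k S) i)
    = \sum_(u in S) (wt u.2)%:R * e u.
  under eq_bigr => i _ do rewrite (A_formula HS) mulr_sumr.
  rewrite exchange_big /=; apply: eq_bigr => u uS.
  rewrite (bigD1 (Ordinal (wle u.2))) //= eqxx mulr1 big1 ?addr0 //.
  move=> i ne; case: eqP => [ei|]; last by rewrite mulr0.
  by move: ne; rewrite -val_eqE /= ei eqxx.
have hR : SL_B k (code_projector k S) n = ((2 ^ (n - k))%:R)^-1 * (3 ^ n)%:R * \sum_(u in S) e u.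
  rewrite (B_formula HS) exchange_big /= -[RHS]mulrA [in RHS]mulr_sumr; congr (_ * _).
  by apply: eq_bigr => u uS; rewrite K_n hG.
rewrite hL hR.
have hK : n%:R / 4%:R * ((2 ^ (n - k))%:R / (3 ^ n)%:R) *
    (((2 ^ (n - k))%:R)^-1 * (3 ^ n)%:R * \sum_(u in S) e u) =
    \sum_(u in S) n%:R / 4%:R * e u.
  rewrite mulrA -mulr_sumr; congr (_ * _).
  have h2 : ((2 ^ (n - k))%:R : algC) != 0 by rewrite pnatr_eq0 expn_eq0.
  have h3 : ((3 ^ n)%:R : algC) != 0 by rewrite pnatr_eq0 expn_eq0.
  have h4 : (4%:R : algC) != 0 by rewrite pnatr_eq0.
  by field; rewrite h2 h3.
rewrite hK -subr_ge0 -sumrB.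
have hp := posit HS hev.
have -> : \sum_(u in S) (n%:R / 4%:R * e u - (wt u.2)%:R * e u) =
    (4%:R)^-1 * \sum_(u in S) ((3 ^ wt u.2)%:R)^-1 * (n%:R - 4%:R * (wt u.2)%:R).
  rewrite mulr_sumr; apply: eq_bigr => u _; rewrite /e.
  have h4 : (4%:R : algC) != 0 by rewrite pnatr_eq0.
  by field; rewrite ?pnatr_eq0 ?expn_eq0.
by rewrite pmulr_rge0 // invr_gt0 ltr0n.
Qed.
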